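(* Let $d\ge2$ and for real $\eta,\beta$ let $\rho(\eta,\beta)=(1-\eta-\beta)\frac{\mathbb{I}}{d^2}+\eta\frac{V}{d}+\beta\frac{V^{T_A}}{d}$ on $\mathbb{C}^d\otimes\mathbb{C}^d$. Then $\rho(\eta,\beta)$ is local-positive if and only if $$-\frac{1}{d-1}\le\eta+\beta\le1,\qquad -(d-1)\eta+\beta\le1,\qquad \eta-(d-1)\beta\le1.$$
   Context: $V=\sum_{i,j}|ij\rangle\langle ji|$ is the swap operator and $V^{T_A}=\sum_{i,j}|ii\rangle\langle jj|$ its partial transpose on the first factor in a fixed orthonormal basis. An operator $M$ on $\mathcal{H}_A\otimes\mathcal{H}_B$ is local-positive if $\operatorname{Tr}(M\,P_A\otimes P_B)\ge0$ for all rank-one projectors $P_A$ on $\mathcal{H}_A$ and $P_B$ on $\mathcal{H}_B$. *)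

(* Defs.v *)
(* Scalars: an arbitrary numClosedFieldType C (e.g. algC);
   the theorem is purely algebraic, so this generalizes C = complex numbers. *)
From HB Require Import structures.
From mathcomp Require Import all_boot all_order all_algebra.
Set Implicit Arguments. Unset Strict Implicit. Unset Printing Implicit Defensive.
Import Order.TTheory GRing.Theory Num.Theory.
Local Open Scope ring_scope.

Section Defs.
Variable C : numClosedFieldType.

(* basis |i j> of C^m (x) C^n is indexed by mxvec_index i j : 'I_(m*n);
   idx_pair is the inverse decoding *)
Definition idx_pair (m n : nat) (k : 'I_(m * n)) : 'I_m * 'I_n :=
  enum_val (cast_ord (esym (@mxvec_cast m n)) k).

Definition tens (m n : nat) (A : 'M[C]_m) (B : 'M[C]_n) : 'M[C]_(m * n) :=
  \matrix_(k, l) (A (idx_pair k).1 (idx_pair l).1 * B (idx_pair k).2 (idx_pair l).2).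

Definition adjmx (m n : nat) (A : 'M[C]_(m, n)) : 'M[C]_(n, m) :=
  map_mx (fun x => x^*) A^T.

Definition rank_one_projector (n : nat) (P : 'M[C]_n) : Prop :=
  adjmx P = P /\ P *m P = P /\ \rank P = 1%N.

Definition swapV (d : nat) : 'M[C]_(d * d) :=
  \sum_(i < d) \sum_(j < d) delta_mx (mxvec_index i j) (mxvec_index j i).

(* partial transpose on the first factor: V^{T_A} = sum_{i,j} |ii><jj| *)
Definition swapV_TA (d : nat) : 'M[C]_(d * d) :=
  \sum_(i < d) \sum_(j < d) delta_mx (mxvec_index i i) (mxvec_index j j).

Definition local_positive (m n : nat) (M : 'M[C]_(m * n)) : Prop :=
  forall (PA : 'M[C]_m) (PB : 'M[C]_n),
    rank_one_projector PA -> rank_one_projector PB ->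
    0 <= \tr (M *m tens PA PB).

Definition rho (d : nat) (eta beta : C) : 'M[C]_(d * d) :=
  ((1 - eta - beta) / (d%:R ^+ 2)) *: 1%:M
  + (eta / d%:R) *: swapV d + (beta / d%:R) *: swapV_TA d.

End Defs.

(* Main.v *)
Require Import Defs.
From HB Require Import structures.
From mathcomp Require Import all_boot all_order all_algebra.
From mathcomp Require Import ring.
Set Implicit Arguments. Unset Strict Implicit. Unset Printing Implicit Defensive.
Import Order.TTheory GRing.Theory Num.Theory.
Local Open Scope ring_scope.

Section L.
Variable C : numClosedFieldType.

Lemma idx_pairK m n (i : 'I_m) (j : 'I_n) : idx_pair (mxvec_index i j) = (i, j).
Proof. by rewrite /idx_pair /mxvec_index cast_ordK enum_rankK. Qed.

Lemma idx_pairV m n (k : 'I_(m * n)) : mxvec_index (idx_pair k).1 (idx_pair k).2 = k.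
Proof. by case: k / (mxvec_indexP k) => i j; rewrite idx_pairK. Qed.

Lemma sum_mxvec m n (F : 'I_(m * n) -> C) :
  \sum_k F k = \sum_(i < m) \sum_(j < n) F (mxvec_index i j).
Proof.
rewrite pair_big /=.
rewrite (reindex (fun p : 'I_m * 'I_n => mxvec_index p.1 p.2)) //=.
exists (@idx_pair m n) => [p _|k _]; last exact: idx_pairV.
by rewrite idx_pairK; case: p.
Qed.

Lemma tensE m n (A : 'M[C]_m) (B : 'M[C]_n) i j k l :
  tens A B (mxvec_index i j) (mxvec_index k l) = A i k * B j l.
Proof. by rewrite /tens mxE !idx_pairK. Qed.

Lemma tr_delta n (a b : 'I_n) (T : 'M[C]_n) : \tr (delta_mx a b *m T) = T b a.
Proof.
rewrite /mxtrace (bigD1 a) //= big1 ?addr0.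
  rewrite mxE (bigD1 b) //= big1 ?addr0; first by rewrite !mxE !eqxx mul1r.
  by move=> k kb; rewrite !mxE eqxx (negbTE kb) mul0r.
move=> i ia; rewrite mxE big1 // => k _; by rewrite mxE (negbTE ia) mul0r.
Qed.

Lemma tr_tens m n (A : 'M[C]_m) (B : 'M[C]_n) : \tr (tens A B) = \tr A * \tr B.
Proof.
rewrite {1}/mxtrace sum_mxvec /mxtrace big_distrl /=; apply: eq_bigr => i _.
rewrite big_distrr /=; apply: eq_bigr => j _; by rewrite tensE.
Qed.

Lemma tr_swap d (A B : 'M[C]_d) : \tr (@swapV C d *m tens A B) = \tr (A *m B).
Proof.
rewrite /swapV mulmx_suml raddf_sum /=.
under eq_bigr do rewrite mulmx_suml raddf_sum /=.
under eq_bigr do under eq_bigr do rewrite tr_delta tensE.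
rewrite /mxtrace; under [RHS]eq_bigr do rewrite mxE.
rewrite exchange_big /=.
by [].
Qed.

Lemma tr_swapTA d (A B : 'M[C]_d) : \tr (@swapV_TA C d *m tens A B) = \tr (A^T *m B).
Proof.
rewrite /swapV_TA mulmx_suml raddf_sum /=.
under eq_bigr do rewrite mulmx_suml raddf_sum /=.
under eq_bigr do under eq_bigr do rewrite tr_delta tensE.
rewrite /mxtrace; under [RHS]eq_bigr do rewrite mxE.
by apply: eq_bigr => i _; apply: eq_bigr => j _; rewrite mxE.
Qed.

Lemma tr_rho d eta beta (A B : 'M[C]_d) :
  \tr (rho d eta beta *m tens A B) =
  (1 - eta - beta) / (d%:R ^+ 2) * (\tr A * \tr B) + eta / d%:R * \tr (A *m B)
  + beta / d%:R * \tr (A^T *m B).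
Proof.
by rewrite /rho !mulmxDl !mxtraceD -!scalemxAl !mxtraceZ mul1mx tr_tens tr_swap tr_swapTA.
Qed.

Lemma adjmx_mul m n p (A : 'M[C]_(m, n)) (B : 'M[C]_(n, p)) :
  adjmx (A *m B) = adjmx B *m adjmx A.
Proof. by rewrite /adjmx trmx_mul map_mxM. Qed.

Lemma adjmx_tr m n (A : 'M[C]_(m, n)) : adjmx A^T = (adjmx A)^T.
Proof. by rewrite /adjmx map_trmx. Qed.

Lemma tr_adj_ge0 m n (A : 'M[C]_(m, n)) : 0 <= \tr (adjmx A *m A).
Proof.
rewrite /mxtrace; apply: sumr_ge0 => i _; rewrite mxE; apply: sumr_ge0 => k _.
by rewrite !mxE mulrC mul_conjC_ge0.
Qed.

Lemma herm_idem_ge0 n (P Q : 'M[C]_n) : adjmx P = P -> P *m P = P ->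
  adjmx Q = Q -> Q *m Q = Q -> 0 <= \tr (P *m Q).
Proof.
move=> hP iP hQ iQ.
have -> : \tr (P *m Q) = \tr (adjmx (P *m Q) *m (P *m Q)).
  rewrite adjmx_mul hP hQ -{1}iP -{1}iQ mulmxA mxtrace_mulC mulmxA -!mulmxA.
  by [].
exact: tr_adj_ge0.
Qed.

Lemma rank1_tr n (P : 'M[C]_n) : rank_one_projector P -> \tr P = 1.
Proof.
case=> hP [iP rP].
have [u [v Puv]] : exists (u : 'M[C]_(n, 1)) (v : 'M[C]_(1, n)), P = u *m v.
  rewrite -(mulmx_base P); move: (col_base P) (row_base P); rewrite rP.
  by move=> c r; exists c, r.
have P0 : P != 0 by rewrite -mxrank_eq0 rP.
set s := (v *m u) 0 0.
have vu : v *m u = s%:M by rewrite [LHS]mx11_scalar.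
have sP : s *: P = P.
  by rewrite -{2}iP Puv mulmxA -(mulmxA u) vu mul_mx_scalar -scalemxAl.
have s1 : s = 1.
  apply/eqP; rewrite -subr_eq0; apply/eqP.
  have : (s - 1) *: P = 0 by rewrite scalerBl sP scale1r subrr.
  by move/eqP; rewrite scaler_eq0 (negbTE P0) orbF => /eqP.
by rewrite Puv mxtrace_mulC vu trace_mx11 mxE eqxx mulr1n.
Qed.

Lemma herm_bounds n (P Q : 'M[C]_n) : adjmx P = P -> P *m P = P -> \tr P = 1 ->
  adjmx Q = Q -> Q *m Q = Q -> 0 <= \tr (P *m Q) <= 1.
Proof.
move=> hP iP tP hQ iQ; rewrite herm_idem_ge0 //=.
have h1 : adjmx (1%:M - Q) = 1%:M - Q.
  by rewrite /adjmx linearB /= trmx1 map_mxB map_mx1 -/(adjmx Q) hQ.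
have i1 : (1%:M - Q) *m (1%:M - Q) = 1%:M - Q.
  by rewrite mulmxBr mulmx1 !mulmxBl mul1mx iQ subrr subr0.
have := herm_idem_ge0 hP iP h1 i1.
by rewrite mulmxBr mulmx1 raddfB /= tP subr_ge0.
Qed.

Lemma proj_bounds n (P Q : 'M[C]_n) : rank_one_projector P -> rank_one_projector Q ->
  0 <= \tr (P *m Q) <= 1 /\ 0 <= \tr (P^T *m Q) <= 1.
Proof.
move=> rP rQ; have tP := rank1_tr rP; case: rP rQ => hP [iP _] [hQ [iQ _]].
split; first exact: herm_bounds.
apply: herm_bounds => //; first by rewrite adjmx_tr hP.
  by rewrite -trmx_mul iP.
by rewrite mxtrace_tr.
Qed.

Lemma adjmxK m n (A : 'M[C]_(m, n)) : adjmx (adjmx A) = A.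
Proof.
by apply/matrixP => i j; rewrite !mxE conjCK.
Qed.

Definition ip n (u w : 'cV[C]_n) : C := (adjmx u *m w) 0 0.
Definition Pv n (u : 'cV[C]_n) : 'M[C]_n := u *m adjmx u.

Lemma Pv_proj n (u : 'cV[C]_n) : ip u u = 1 -> rank_one_projector (Pv u).
Proof.
move=> h; have uu : adjmx u *m u = 1%:M by rewrite [LHS]mx11_scalar -/(ip u u) h.
split; first by rewrite /Pv adjmx_mul adjmxK.
split; first by rewrite /Pv mulmxA -(mulmxA u) uu mulmx1.
apply/eqP; rewrite eqn_leq; apply/andP; split.
  exact: leq_trans (mxrankM_maxl _ _) (rank_leq_col _).
rewrite lt0n mxrank_eq0; apply/eqP => P0.
have : adjmx u *m Pv u *m u = 0 by rewrite P0 mulmx0 mul0mx.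
rewrite /Pv mulmxA uu mul1mx uu => /matrixP /(_ 0 0); rewrite !mxE /=.
by move/eqP; rewrite oner_eq0.
Qed.

Lemma tr_Pv n (u w : 'cV[C]_n) : \tr (Pv u *m Pv w) = ip u w * ip w u.
Proof.
have -> : Pv u *m Pv w = u *m ((adjmx u *m w) *m adjmx w) by rewrite /Pv !mulmxA.
rewrite mxtrace_mulC trace_mx11 -[_ *m u]mulmxA mxE big_ord1.
by [].
Qed.

Lemma Pv_tr n (u : 'cV[C]_n) : (Pv u)^T = Pv (map_mx Num.conj u).
Proof.
rewrite /Pv trmx_mul; congr (_ *m _).
  by apply/matrixP => i j; rewrite !mxE.
by apply/matrixP => i j; rewrite !mxE conjCK.
Qed.

Lemma ipE n (u w : 'cV[C]_n) : ip u w = \sum_k (u k 0)^* * w k 0.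
Proof. by rewrite /ip mxE; apply: eq_bigr => k _; rewrite !mxE. Qed.

Lemma sum_two n (i0 i1 : 'I_n) (F : 'I_n -> C) : i0 != i1 ->
  (forall k, k != i0 -> k != i1 -> F k = 0) -> \sum_k F k = F i0 + F i1.
Proof.
move=> ne h; rewrite (bigD1 i0) //= (bigD1 i1) /=; last by rewrite eq_sym.
by rewrite big1 ?addr0 // => k /andP [k1 k0]; apply: h.
Qed.

Definition gv (d : nat) (eta beta x y : C) :=
  (1 - eta - beta) + d%:R * eta * x + d%:R * beta * y.

Lemma rho_val (d : nat) eta beta x y : (0 < d)%N ->
  (1 - eta - beta) / (d%:R ^+ 2) * (1 * 1) + eta / d%:R * x + beta / d%:R * y
  = gv d eta beta x y / (d%:R ^+ 2).
Proof. by move=> d0; rewrite /gv; field; rewrite pnatr_eq0 -lt0n. Qed.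

Lemma corner d eta beta (u w : 'cV[C]_d) : (0 < d)%N ->
  local_positive (rho d eta beta) -> ip u u = 1 -> ip w w = 1 ->
  0 <= gv d eta beta (ip u w * ip w u)
         (ip (map_mx Num.conj u) w * ip w (map_mx Num.conj u)).
Proof.
move=> d0 H uu ww.
have pu := Pv_proj uu; have pw := Pv_proj ww.
have := H _ _ pu pw; rewrite tr_rho (rank1_tr pu) (rank1_tr pw) Pv_tr !tr_Pv rho_val //.
by rewrite pmulr_lge0 // invr_gt0 exprn_gt0 // ltr0n.
Qed.

Section Two.
Variable d' : nat.
Let i0 : 'I_d'.+2 := ord0.
Let i1 : 'I_d'.+2 := lift ord0 ord0.
Definition vec2 (a b : C) : 'cV[C]_d'.+2 :=
  \col_k (if k == i0 then a else if k == i1 then b else 0).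

Lemma i10 : (i1 == i0) = false.
Proof. by rewrite /i1 /i0 eq_sym (negbTE (neq_lift _ _)). Qed.

Lemma ip_vec2 a b c e : ip (vec2 a b) (vec2 c e) = a^* * c + b^* * e.
Proof.
rewrite ipE (@sum_two _ i0 i1); last first.
- by move=> k k0 k1; rewrite !mxE (negbTE k0) (negbTE k1) conjC0 mul0r.
- by rewrite eq_sym i10.
by rewrite !mxE eqxx i10 eqxx.
Qed.

Lemma map_vec2 a b : map_mx Num.conj (vec2 a b) = vec2 a^* b^*.
Proof.
apply/matrixP => k j; rewrite !mxE.
by case: (k == i0) => //; case: (k == i1) => //; rewrite conjC0.
Qed.



Variables (eta beta : C).
Hypothesis H : local_positive (rho d'.+2 eta beta).

Lemma c11 : 0 <= gv d'.+2 eta beta 1 1.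
Proof.
have e : ip (vec2 1 0) (vec2 1 0) = 1.
  by rewrite ip_vec2 conjC0 conjC1 mul1r mul0r addr0.
have := corner (u := vec2 1 0) (w := vec2 1 0) isT H e e.
by rewrite map_vec2 conjC0 conjC1 e mulr1.
Qed.

Lemma c00 : 0 <= gv d'.+2 eta beta 0 0.
Proof.
have e : ip (vec2 1 0) (vec2 1 0) = 1.
  by rewrite ip_vec2 conjC0 conjC1 mul1r mul0r addr0.
have e' : ip (vec2 0 1) (vec2 0 1) = 1.
  by rewrite ip_vec2 conjC0 conjC1 mul1r mul0r add0r.
have := corner (u := vec2 0 1) (w := vec2 1 0) isT H e' e.
by rewrite map_vec2 conjC0 conjC1 !ip_vec2 !conjC0 !conjC1 !(mul0r, mulr0, mul1r, addr0).
Qed.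

Let r : C := sqrtC 2^-1.
Lemma rc : r^* = r.
Proof. by rewrite geC0_conj // sqrtC_ge0 invr_ge0 ler0n. Qed.
Lemma rr : r * r = 2^-1.
Proof. by rewrite -expr2 sqrtCK. Qed.

Lemma E1 : ip (vec2 r (r*'i)) (vec2 r (r*'i)) = 1.
Proof.
rewrite ip_vec2 rmorphM /= rc conjCi.
transitivity (r * r * (1 - 'i * 'i)); first by ring.
by rewrite rr mulCii; field.
Qed.
Lemma E2 : ip (vec2 r (-(r*'i))) (vec2 r (-(r*'i))) = 1.
Proof.
rewrite ip_vec2 rmorphN rmorphM /= rc conjCi.
transitivity (r * r * (1 - 'i * 'i)); first by ring.
by rewrite rr mulCii; field.
Qed.
Lemma E3 : ip (vec2 r (-(r*'i))) (vec2 r (r*'i)) = 0.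
Proof.
rewrite ip_vec2 rmorphN rmorphM /= rc conjCi.
transitivity (r * r * (1 + 'i * 'i)); first by ring.
by rewrite mulCii subrr mulr0.
Qed.
Lemma M1 : map_mx Num.conj (vec2 r (r*'i)) = vec2 r (-(r*'i)).
Proof. by rewrite map_vec2 rmorphM /= rc conjCi mulrN. Qed.
Lemma M2 : map_mx Num.conj (vec2 r (-(r*'i))) = vec2 r (r*'i).
Proof. by rewrite map_vec2 rmorphN rmorphM /= rc conjCi mulrN opprK. Qed.

Lemma c10 : 0 <= gv d'.+2 eta beta 1 0.
Proof.
have := corner (u := vec2 r (r*'i)) (w := vec2 r (r*'i)) isT H E1 E1.
by rewrite M1 E1 E3 mulr1 mul0r.
Qed.

Lemma c01 : 0 <= gv d'.+2 eta beta 0 1.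
Proof.
have := corner (u := vec2 r (-(r*'i))) (w := vec2 r (r*'i)) isT H E2 E1.
by rewrite M2 E1 E3 mulr1 mul0r.
Qed.
End Two.

End L.

Theorem mainTheorem8 (C : numClosedFieldType) (d : nat) (hd : (2 <= d)%N)
    (eta beta : C) (heta : eta \is Num.real) (hbeta : beta \is Num.real) :
  local_positive (rho d eta beta) <->
  [/\ - 1 / (d%:R - 1) <= eta + beta, eta + beta <= 1,
      - (d%:R - 1) * eta + beta <= 1 & eta - (d%:R - 1) * beta <= 1].
Proof.
case: d hd => [//|[//|d']] _.
have Dp : 0 < (d'.+2)%:R - 1 :> C by rewrite subr_gt0 ltr1n.
have k11 : (- 1 / ((d'.+2)%:R - 1) <= eta + beta) = (0 <= gv d'.+2 eta beta 1 1).
  by rewrite ler_pdivrMr // -subr_ge0; congr (0 <= _); rewrite /gv; ring.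
have k00 : (eta + beta <= 1) = (0 <= gv d'.+2 eta beta 0 0).
  by rewrite -subr_ge0; congr (0 <= _); rewrite /gv; ring.
have k10 : (- ((d'.+2)%:R - 1) * eta + beta <= 1) = (0 <= gv d'.+2 eta beta 1 0).
  by rewrite -subr_ge0; congr (0 <= _); rewrite /gv; ring.
have k01 : (eta - ((d'.+2)%:R - 1) * beta <= 1) = (0 <= gv d'.+2 eta beta 0 1).
  by rewrite -subr_ge0; congr (0 <= _); rewrite /gv; ring.
rewrite k11 k00 k10 k01; split.
  by move=> H; split; [exact: c11 H | exact: c00 H | exact: c10 H | exact: c01 H].
case=> h11 h00 h10 h01 PA PB hA hB.
rewrite tr_rho (rank1_tr hA) (rank1_tr hB) rho_val //.
have [/andP [x0 x1] /andP [y0 y1]] := proj_bounds hA hB.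
apply: divr_ge0; last by rewrite exprn_ge0 // ler0n.
move: x0 x1 y0 y1; set x := \tr (PA *m PB); set y := \tr (PA^T *m PB) => x0 x1 y0 y1.
rewrite -subr_ge0 in x1; rewrite -subr_ge0 in y1.
have -> : gv d'.+2 eta beta x y =
  (1 - x) * (1 - y) * gv d'.+2 eta beta 0 0 + x * (1 - y) * gv d'.+2 eta beta 1 0
  + (1 - x) * y * gv d'.+2 eta beta 0 1 + x * y * gv d'.+2 eta beta 1 1.
  by rewrite /gv; ring.
by rewrite !addr_ge0 // !mulr_ge0.
Qed.
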